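(* Let $k$ be a commutative ring, $n\geq 3$ and $m\geq 3$, and let $D_m$ be the dg-category defined below. For all $1\leq i,j\leq m$ there are isomorphisms of graded $k$-modules \[ H_\ast\operatorname{Hom}_{D_m}(z_i,z_j)\cong\begin{cases} k[t_{n-2}] & j=i,\\ k[t_{n-2}] & j=i+1,\ 1\le i\le m-1,\\ k[t_{n-2}][n-m] & i=m,\ j=1,\\ 0 & \text{otherwise},\end{cases}\] where $k[t_{n-2}]$ denotes the polynomial ring on a generator of degree $n-2$ (as a graded $k$-module) and $[s]$ shifts degrees up by $s$.
   Context: $D_m$ is the $k$-linear dg-category with objects $z_1,\dots,z_m$ whose morphisms are freely generated (as a graded $k$-linear category) by morphisms $b_{i,j}:z_i\to z_j$ for all $i\neq j$, of degree $j-i-1$ if $j>i$ and of degree $n+j-i-1$ if $j<i$, with differential determined on generators by \[ d(b_{i,j})=\begin{cases} \sum_{i<k<j}(-1)^{j-k+1}b_{k,j}b_{i,k} & j>i,\\ \sum_{i<k\le m}(-1)^{j-k+n+1}b_{k,j}b_{i,k}+\sum_{1\le k<j}(-1)^{j-k+1}b_{k,j}b_{i,k} & j<i,\end{cases}\] where $b_{k,j}b_{i,k}$ denotes the composite $z_i\to z_k\to z_j$. Homological grading is used. *)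

(* Defs.v *)
From HB Require Import structures.
From mathcomp Require Import all_boot all_order all_algebra.
Set Implicit Arguments. Unset Strict Implicit. Unset Printing Implicit Defensive.
Import Order.TTheory GRing.Theory Num.Theory.
Local Open Scope ring_scope.

(* The dg-category D_m (parameters n, m; objects z_1..z_m, encoded by  *)
(* natural numbers 1..m).                                              *)
(* A basis element of Hom(z_i, z_j) (a word in the generators b_{a,b}) *)
(* is encoded as the list of visited objects [:: i; v_1; ...; j]: the  *)
(* list [:: v_0; v_1; ...; v_l] stands for the composite               *)
(*   b_{v_{l-1},v_l} ... b_{v_1,v_2} b_{v_0,v_1},                      *)
(* and [:: i] stands for the identity of z_i.                          *)

Definition edge_deg (n a b : nat) : int :=
  if (a < b)%N then b%:Z - a%:Z - 1 else n%:Z + b%:Z - a%:Z - 1.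

Fixpoint path_deg (n : nat) (p : seq nat) : int :=
  match p with
  | a :: ((b :: _) as s) => edge_deg n a b + path_deg n s
  | _ => 0
  end.

Definition valid_path (m : nat) (p : seq nat) : bool :=
  all (fun v => (0 < v <= m)%N) p &&
  (if p is x :: s then path (fun a b => a != b) x s else false).

(* basis words of Hom^{d}_{D_m}(z_i, z_j) (homological degree d) *)
Definition hom_word (n m i j : nat) (d : int) (p : seq nat) : Prop :=
  [/\ valid_path m p, head 0%N p = i, last 0%N p = j & path_deg n p = d].

Definition sgn (k : pzRingType) (z : int) : k := (-1) ^+ `|z|%N.

(* coefficient of b_{c,b} b_{a,c} in d(b_{a,b}) *)
Definition dcoef (k : pzRingType) (n m a c b : nat) : k :=
  if (a < b)%N then
    (if (a < c < b)%N then sgn k (b%:Z - c%:Z + 1) else 0)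
  else if (b < a)%N then
    (if (a < c <= m)%N then sgn k (b%:Z - c%:Z + n%:Z + 1)
     else if (1 <= c < b)%N then sgn k (b%:Z - c%:Z + 1) else 0)
  else 0.

(* Elements of the free k-module on words: functions  seq nat -> k,     *)
(* required (below) to be finitely supported.                           *)
Definition chain (k : pzRingType) := seq nat -> k.

(* The differential, extended from the generators by the graded Leibniz *)
(* rule d(f g) = d(f) g + (-1)^{|f|} f d(g) (g applied first).          *)
(* Coefficient of the word q in d(f): sum over the interior positions t *)
(* of q, where the word q arises from the word q' = q without v_t by    *)
(* replacing b_{v_{t-1},v_{t+1}} with b_{v_t,v_{t+1}} b_{v_{t-1},v_t};  *)
(* the Koszul sign is (-1)^(degree of the part of q after v_{t+1}).     *)
Definition dchain (k : pzRingType) (n m : nat) (f : chain k) : chain k :=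
  fun q => \sum_(1 <= t < (size q).-1)
     (dcoef k n m (nth 0%N q t.-1) (nth 0%N q t) (nth 0%N q t.+1)
      * sgn k (path_deg n (drop t.+1 q)))
     * f (take t q ++ drop t.+1 q).

Definition is_chain (k : pzRingType) (n m i j : nat) (d : int) (f : chain k)
  : Prop :=
  (exists s : seq (seq nat), forall p, f p != 0 -> p \in s) /\
  (forall p, f p != 0 -> hom_word n m i j d p).

Definition is_cycle (k : pzRingType) (n m i j : nat) (d : int) (f : chain k)
  : Prop := is_chain n m i j d f /\ forall q, dchain n m f q = 0.

Definition is_boundary (k : pzRingType) (n m i j : nat) (d : int) (f : chain k)
  : Prop := exists g : chain k, is_chain n m i j (d + 1) g /\
                                forall q, f q = dchain n m g q.

(* H_d Hom_{D_m}(z_i, z_j) = Z_d / B_d is isomorphic, as a k-module, to  *)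
(* the free module k^r: there is a k-linear map from the cycles Z_d onto *)
(* k^r whose kernel is exactly the boundaries B_d.                      *)
Definition homology_iso_free (k : comPzRingType) (n m i j : nat) (d : int)
  (r : nat) : Prop :=
  exists phi : chain k -> 'rV[k]_r,
    [/\ forall (a : k) (x y : chain k),
          is_cycle n m i j d x -> is_cycle n m i j d y ->
          phi (fun p => a * x p + y p) = a *: phi x + phi y,
        forall v : 'rV[k]_r, exists x, is_cycle n m i j d x /\ phi x = v
      & forall x, is_cycle n m i j d x ->
          (phi x = 0 <-> is_boundary n m i j d x)].

(* The graded k-module k[t_e] (t of degree e) shifted by s: its degree-d *)
(* component is free of rank 1 (spanned by t^((d-s)/e)) if d - s >= 0    *)
(* and e divides d - s, and is 0 otherwise.                             *)
Definition poly_shift_rank (e : nat) (s : int) (d : int) : nat :=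
  if (0 <= d - s) && (e%:Z %| (d - s))%Z then 1%N else 0%N.

(* The right-hand side of the theorem, as the rank of its degree-d part *)
Definition expected_rank (n m i j : nat) (d : int) : nat :=
  if j == i then poly_shift_rank (n - 2) 0 d
  else if (j == i.+1) && (1 <= i <= m - 1)%N then poly_shift_rank (n - 2) 0 d
  else if (i == m) && (j == 1%N) then poly_shift_rank (n - 2) (n%:Z - m%:Z) d
  else 0%N.

(* Main.v *)
Require Import Defs.
From HB Require Import structures.
From mathcomp Require Import all_boot all_order all_algebra.
From mathcomp Require Import zify ring.
Import Order.TTheory GRing.Theory Num.Theory.
Local Open Scope ring_scope.
Set Implicit Arguments. Unset Strict Implicit. Unset Printing Implicit Defensive.

Section S.
Variable k : comPzRingType.
Variables n m : nat.
Hypothesis Hn : (3 <= n)%N.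
Hypothesis Hm : (3 <= m)%N.

Lemma sgn_par (z : int) : sgn k z = (-1) ^+ (odd `|z|%N).
Proof. by rewrite /sgn signr_odd. Qed.

Lemma sgnD (a b : int) : sgn k (a + b) = sgn k a * sgn k b.
Proof. rewrite !sgn_par -signr_addb; congr (_ ^+ _); lia. Qed.

Lemma sgn_eq (a b : int) : odd `|a|%N = odd `|b|%N -> sgn k a = sgn k b.
Proof. by rewrite !sgn_par => ->. Qed.

Lemma sgn_neq (a b : int) : odd `|a|%N = ~~ odd `|b|%N -> sgn k a = - sgn k b.
Proof. rewrite !sgn_par => ->. by case: (odd _); rewrite /= ?opprK ?expr1 ?expr0. Qed.

Lemma sgn_sum0 (a b : int) : odd `|a|%N = ~~ odd `|b|%N -> sgn k a + sgn k b = 0.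
Proof. by move/sgn_neq ->; rewrite addNr. Qed.

Definition sc (a : nat) : nat := if a == m then 1%N else a.+1.
Definition rng (v : nat) : bool := (0 < v <= m)%N.
Definition sigT (a b : nat) : k := sgn k (edge_deg n (sc a) a + edge_deg n b a).

Ltac unf := rewrite /dcoef /sigT /sc /edge_deg /rng.
Ltac splitsc := repeat match goal with |- context [if ?a == m then _ else _] =>
   let H := fresh "E" in case: (eqVneq a m) => H; [rewrite H eqxx | rewrite (negbTE H)] end.
Ltac brute := repeat (let H := fresh "H" in case: ifP => H); try lia; try done.
Ltac sgnfin := rewrite ?mulr0 ?mul0r ?addr0 ?add0r -?sgnD;
  first [ by apply: sgn_eq; lia | by apply: sgn_sum0; lia | by [] ].

Lemma F0 a c b : dcoef k n m a c b = 0 \/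
  edge_deg n a b = edge_deg n a c + edge_deg n c b + 1.
Proof. unf; brute; try (by left); right; lia. Qed.

Lemma F1 a b : rng a -> rng b -> b != a -> b != sc a ->
  dcoef k n m a (sc a) b = sgn k (edge_deg n (sc a) b).
Proof. unf => Ha Hb Hba Hbs; case Ea: (a == m); move: Hbs; brute => _; sgnfin. Qed.

Lemma F1deg a b : rng a -> rng b -> b != a -> b != sc a ->
  edge_deg n a b = edge_deg n a (sc a) + edge_deg n (sc a) b + 1.
Proof. unf => Ha Hb Hba Hbs; case Ea: (a == m); move: Hbs; brute. Qed.

Lemma F2 a b : rng a -> rng b -> b != a -> b != sc a ->
  dcoef k n m (sc a) b a = sgn k (edge_deg n b a).
Proof. unf => Ha Hb Hba Hbs; case Ea: (a == m); move: Hbs; brute => _; sgnfin. Qed.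

Lemma F2deg a b : rng a -> rng b -> b != a -> b != sc a ->
  edge_deg n (sc a) a = edge_deg n (sc a) b + edge_deg n b a + 1.
Proof. unf => Ha Hb Hba Hbs; case Ea: (a == m); move: Hbs; brute. Qed.

Lemma F3 a b c : rng a -> rng b -> rng c -> b != a -> b != sc a ->
  c != a -> c != sc a -> dcoef k n m a b c = dcoef k n m (sc a) b c.
Proof. unf => Ha Hb Hc Hba Hbs Hca Hcs; case Ea: (a == m); move: Hbs Hcs; brute => _ _; sgnfin. Qed.

Lemma F5 a b : rng a -> rng b -> dcoef k n m (sc a) a b = 0.
Proof. unf => Ha Hb; case Ea: (a == m); brute. Qed.

Lemma F6a a c : dcoef k n m a a c = 0.
Proof. unf; brute. Qed.
Lemma F6b a c : dcoef k n m a c a = 0.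
Proof. unf; brute. Qed.
Lemma F6c a b : dcoef k n m a b b = 0.
Proof. unf; brute. Qed.

Lemma F7 a b c : rng a -> rng b -> rng c -> b != a -> c != a ->
  dcoef k n m a b c * sgn k (edge_deg n c a) * sigT a c + dcoef k n m b c a * sigT a b = 0.
Proof. unf => Ha Hb Hc Hba Hca; case Ea: (a == m); brute; sgnfin. Qed.

Lemma F8 i c : rng i -> dcoef k n m i c (sc i) = 0.
Proof. unf => Hi; case Ea: (i == m); brute. Qed.

Lemma F9 a b c : ~~ rng b -> (a <= m)%N -> (c <= m)%N -> dcoef k n m a b c = 0.
Proof. unf => Hb Ha Hc; brute. Qed.


Lemma sc_rng a : rng a -> rng (sc a).
Proof. rewrite /rng /sc => Ha; case: ifP => H; lia. Qed.

Lemma sc_neq a : rng a -> sc a != a.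
Proof. rewrite /rng /sc => Ha; case: ifP => H; lia. Qed.

Lemma sc_le a : (a <= m)%N -> (sc a <= m)%N.
Proof. rewrite /sc => Ha; case: ifP => H; lia. Qed.

Lemma esum a b : a != b -> edge_deg n a b + edge_deg n b a = n%:Z - 2.
Proof. rewrite /edge_deg => H; brute. Qed.

Lemma sgn0 : sgn k 0 = 1.
Proof. by rewrite /sgn expr0. Qed.

Lemma sigT_sc a : rng a -> sigT a (sc a) = 1.
Proof. move=> Ha; rewrite /sigT -sgn0; apply: sgn_eq; lia. Qed.

Lemma valid_nil : valid_path m [::] = false.
Proof. by []. Qed.

Lemma valid1 a : valid_path m [:: a] = rng a.
Proof. by rewrite /valid_path /rng /= !andbT. Qed.

Lemma valid2 a b t : valid_path m (a :: b :: t) = [&& rng a, a != b & valid_path m (b :: t)].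
Proof.
rewrite /valid_path /rng /=.
by case: (0 < a <= m)%N; case: (a != b); case: (0 < b <= m)%N; case: (all _ t); rewrite /= ?andbF.
Qed.

Lemma path_deg_cons2 a b t : path_deg n (a :: b :: t) = edge_deg n a b + path_deg n (b :: t).
Proof. by []. Qed.

Lemma path_deg1 a : path_deg n [:: a] = 0.
Proof. by []. Qed.

Definition hdterm (f : chain k) (a : nat) (q : seq nat) : k :=
  match q with
  | b :: c :: r => dcoef k n m a b c * sgn k (path_deg n (c :: r)) * f (a :: c :: r)
  | _ => 0
  end.

Lemma dchain_cons (f : chain k) a q :
  dchain n m f (a :: q) = hdterm f a q + dchain n m (fun p => f (a :: p)) q.
Proof.
rewrite /dchain /=.
case: q => [|b [|c r]] /=.
- by rewrite !big_geq // add0r.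
- by rewrite !big_geq // add0r.
rewrite big_nat_recl //; congr (_ + _).
apply: eq_big_nat => t /andP [t1 _].
by case: t t1.
Qed.

Lemma dchain_ext (f g : chain k) q : (forall p, f p = g p) -> dchain n m f q = dchain n m g q.
Proof. by move=> H; rewrite /dchain; apply: eq_bigr => t _; rewrite H. Qed.

Lemma dchain_head_ext (f g : chain k) a q :
  (forall p, f (a :: p) = g (a :: p)) -> dchain n m f (a :: q) = dchain n m g (a :: q).
Proof.
move=> H; rewrite !dchain_cons; congr (_ + _).
  by case: q => [|b [|c r]] //=; rewrite H.
by apply: dchain_ext.
Qed.

Lemma dchain0 q : dchain n m (fun _ => 0 : k) q = 0.
Proof. by rewrite /dchain big1 // => t _; rewrite mulr0. Qed.

Lemma dchainD (f g : chain k) q :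
  dchain n m (fun p => f p + g p) q = dchain n m f q + dchain n m g q.
Proof. by rewrite /dchain -big_split; apply: eq_bigr => t _; rewrite mulrDr. Qed.

Lemma dchainZ (c : k) (f : chain k) q :
  dchain n m (fun p => c * f p) q = c * dchain n m f q.
Proof. by rewrite /dchain mulr_sumr; apply: eq_bigr => t _; rewrite mulrCA. Qed.

Lemma dchain_sgnhead q : forall b u (F : chain k),
  dchain n m (fun p => sgn k (path_deg n (u :: p)) * F p) (b :: q) =
  - sgn k (path_deg n (u :: b :: q)) * dchain n m F (b :: q).
Proof.
elim: q => [|c q IH] b u F.
  by rewrite /dchain !big_geq // mulr0.
rewrite [LHS]dchain_cons [in RHS]dchain_cons mulrDr; congr (_ + _).
  case: q {IH} => [|d r] /=; first by rewrite mulr0.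
  case: (F0 b c d) => [->|E]; first by rewrite !mul0r mulr0.
  rewrite E.
  have -> : sgn k (edge_deg n u b + (edge_deg n b c + edge_deg n c d + 1 + path_deg n (d :: r)))
     = - sgn k (edge_deg n u b + (edge_deg n b c + (edge_deg n c d + path_deg n (d :: r)))).
    by apply: sgn_neq; lia.
  ring.
have -> : dchain n m (fun p => sgn k (path_deg n (u :: b :: p)) * F (b :: p)) (c :: q)
  = sgn k (edge_deg n u b) *
    dchain n m (fun p => sgn k (path_deg n (b :: p)) * F (b :: p)) (c :: q).
  rewrite -dchainZ; apply: dchain_ext => p; rewrite path_deg_cons2 sgnD; ring.
rewrite IH (path_deg_cons2 u b) sgnD; ring.
Qed.

Arguments path_deg : simpl never.
Arguments edge_deg : simpl never.
Arguments dcoef : simpl never.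
Arguments sgn : simpl never.

Definition hop (x : chain k) : chain k := fun q =>
  match q with
  | a :: b :: t => if (b == sc a) || (b == a) then 0
                   else sgn k (path_deg n (sc a :: b :: t)) * x (a :: sc a :: b :: t)
  | _ => 0 end.
Definition Top (y : chain k) : chain k := fun q =>
  match q with
  | a :: b :: c :: t => if [&& c == a, b != a & rng b] then sigT a b * y (c :: t) else 0
  | _ => 0 end.
Definition base (x : chain k) : chain k := fun q =>
  match q with
  | [:: a] => x q
  | [:: a; b] => if b == sc a then x q else 0
  | _ => 0 end.
Definition pop (x : chain k) : chain k := fun w =>
  match w with a :: _ => x (a :: sc a :: w) | [::] => 0 end.
Definition svalid (x : chain k) := forall p, x p != 0 -> valid_path m p.

Lemma hdterm_eq (f : chain k) a b c r :
  hdterm f a (b :: c :: r) = dcoef k n m a b c * sgn k (path_deg n (c :: r)) * f (a :: c :: r).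
Proof. by []. Qed.
Lemma hop_eq x a b t : hop x (a :: b :: t) = if (b == sc a) || (b == a) then 0
                   else sgn k (path_deg n (sc a :: b :: t)) * x (a :: sc a :: b :: t).
Proof. by []. Qed.
Lemma hopF x a b t : ~~ ((b == sc a) || (b == a)) -> hop x (a :: b :: t) =
  sgn k (path_deg n (sc a :: b :: t)) * x (a :: sc a :: b :: t).
Proof. by rewrite hop_eq => /negbTE ->. Qed.
Lemma hopT x a b t : (b == sc a) || (b == a) -> hop x (a :: b :: t) = 0.
Proof. by rewrite hop_eq => ->. Qed.
Lemma Top_eq y a b c t : Top y (a :: b :: c :: t) =
  if [&& c == a, b != a & rng b] then sigT a b * y (c :: t) else 0.
Proof. by []. Qed.

Lemma base3 x a b c t : base x (a :: b :: c :: t) = 0.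
Proof. by []. Qed.

Lemma sv0 x p : svalid x -> ~~ valid_path m p -> x p = 0.
Proof. move=> H Hp; have [//|/H] := eqVneq (x p) 0; by rewrite (negbTE Hp). Qed.

Lemma valid_hd a t : valid_path m (a :: t) -> rng a.
Proof. by case: t => [|b t]; rewrite ?valid1 ?valid2 // => /andP[]. Qed.

Lemma valid_tl a t : valid_path m (a :: t) -> t != [::] -> valid_path m t.
Proof. by case: t => [|b t] //; rewrite valid2 => /and3P[]. Qed.

Lemma sgn_sq z : sgn k z * sgn k z = 1.
Proof. rewrite -sgnD -sgn0; apply: sgn_eq; lia. Qed.

Lemma dchain_small (f : chain k) q : (size q <= 2)%N -> dchain n m f q = 0.
Proof. by move=> H; rewrite /dchain big_geq //; lia. Qed.

Lemma lemA x : svalid x -> forall q,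
  x q = dchain n m (hop x) q + hop (dchain n m x) q + base x q + Top (pop x) q.
Proof.
move=> Hx [|a [|b [|c t]]].
- by rewrite dchain_small // (sv0 Hx) // /= !addr0.
- by rewrite dchain_small // /= !addr0 add0r.
- rewrite dchain_small // hop_eq /= addr0 add0r.
  case: ifP => [/orP[/eqP->|/eqP->]|/norP[Hb1 Hb2]].
  + by rewrite eqxx add0r.
  + rewrite add0r; case: ifP => _ //; apply: sv0 => //; by rewrite valid2 eqxx andbF.
  + rewrite (negbTE Hb1) addr0 dchain_cons hdterm_eq dchain_small // !addr0.
    have [x0|xn] := eqVneq (x [:: a; b]) 0; first by rewrite x0 !mulr0.
    move: (Hx _ xn); rewrite valid2 valid1 => /and3P[ra _ rb].
    rewrite F1 // path_deg_cons2 !path_deg1 addr0.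
    by rewrite sgn0 mulr1 mulrA sgn_sq mul1r.
rewrite [dchain n m (hop x) _]dchain_cons hdterm_eq.
have [Hb|Hb] := boolP ((b == sc a) || (b == a)).
- rewrite (@dchain_head_ext _ (fun _ => 0)); last by move=> p; rewrite /= ?hop_eq Hb.
  rewrite dchain0 (hop_eq (dchain n m x)) Hb base3 !addr0 Top_eq.
  case/orP: Hb => /eqP Hb; subst b.
  + have [xq|xq] := eqVneq (x [:: a, sc a, c & t]) 0.
    * rewrite xq hop_eq; case: ifP => _; rewrite ?xq ?mulr0 ?add0r;
      (case: ifP => [/andP[/eqP ca _]|_]; [subst c; by rewrite /pop xq mulr0 | by []]).
    move: (Hx _ xq); rewrite !valid2 => /and3P[ra _ /and3P[rs sc_c vc]].
    have rc := valid_hd vc.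
    have [ca|ca] := eqVneq c a.
    * subst c; rewrite hop_eq eqxx orbT mulr0 add0r sc_neq // rs /= sigT_sc //.
      by rewrite mul1r.
    * have sc_c' : c != sc a by rewrite eq_sym.
      rewrite hop_eq (negbTE ca) (negbTE sc_c') /= addr0.
      rewrite F1 //.
      rewrite path_deg_cons2 sgnD.
      set u := sgn k (edge_deg n (sc a) c); set v := sgn k (path_deg n (c :: t)).
      have -> : u * v * (u * v * x [:: a, sc a, c & t]) = (u * u) * (v * v) * x [:: a, sc a, c & t] by ring.
      by rewrite !sgn_sq !mul1r.
  + rewrite F6a !mul0r add0r eqxx /= andbF; apply: sv0 => //.
    by rewrite valid2 eqxx andbF.
have /norP [Hb1 Hb2] := Hb.
rewrite (@dchain_head_ext _ (fun p => sgn k (path_deg n (sc a :: p)) * x (a :: sc a :: p)));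
  last by move=> p; rewrite /= ?hop_eq (negbTE Hb1) (negbTE Hb2).
rewrite dchain_sgnhead (hopF (dchain n m x) _ Hb).
rewrite [dchain n m x _]dchain_cons hdterm_eq [dchain n m (fun p => x (a :: p)) _]dchain_cons hdterm_eq base3 addr0.
set S := sgn k (path_deg n [:: sc a, b, c & t]).
set D := dchain n m (fun p => x [:: a, sc a & p]) [:: b, c & t].
set Y := x [:: a, sc a, c & t].
set X := x [:: a, b, c & t].
have HX : S * (dcoef k n m a (sc a) b * sgn k (path_deg n [:: b, c & t])) * X = X.
  have [x0|xn] := eqVneq X 0; first by rewrite x0 mulr0.
  move: (Hx _ xn); rewrite valid2 => /and3P[ra _ vb]; have rb := valid_hd vb.
  rewrite F1 // /S path_deg_cons2 sgnD.
  set u := sgn k (edge_deg n (sc a) b); set v := sgn k (path_deg n [:: b, c & t]).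
  have -> : u * v * (u * v) * X = (u * u) * (v * v) * X by ring.
  by rewrite !sgn_sq !mul1r.
have HY : dcoef k n m a b c * sgn k (path_deg n (c :: t)) * hop x [:: a, c & t] +
   S * (dcoef k n m (sc a) b c * sgn k (path_deg n (c :: t)) * Y) + Top (pop x) [:: a, b, c & t] = 0.
  rewrite Top_eq hop_eq -/Y.
  have [y0|yn] := eqVneq Y 0.
    rewrite y0 !mulr0 if_same !mulr0 !add0r.
    case: ifP => [/andP [/eqP ca _]|//].
    subst c; by rewrite /pop -/Y y0 mulr0.
  move: (Hx _ yn); rewrite !valid2 => /and3P[ra _ /and3P[rs sc_c vc]].
  have rc := valid_hd vc.
  have sc_c' : c != sc a by rewrite eq_sym.
  have [ca|ca] := eqVneq c a.
  - subst c; rewrite orbT mulr0 add0r Hb2 /= -/Y.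
    case: (boolP (rng b)) => rb.
    + rewrite F2 // /sigT (F2deg ra rb Hb2 Hb1) /S !path_deg_cons2.
      set e1 := edge_deg n (sc a) b; set e2 := edge_deg n b a; set d0 := path_deg n (a :: t).
      transitivity ((sgn k (e1 + (e2 + d0)) * (sgn k e2 * sgn k d0) + sgn k (e1 + e2 + 1 + e2)) * Y); first by ring.
      rewrite -!sgnD sgn_sum0 ?mul0r //; lia.
    + rewrite F9 //; last by move: ra; rewrite /rng; lia.
      by rewrite !mul0r mulr0 addr0.
      by apply: sc_le; move: ra; rewrite /rng; lia.
  - rewrite (negbTE sc_c') /= addr0.
    case: (boolP (rng b)) => rb.
    + rewrite (F3 ra rb rc Hb2 Hb1 ca sc_c').
      case: (F0 (sc a) b c) => [->|E]; first by rewrite !mul0r mulr0 addr0.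
      rewrite /S !path_deg_cons2 E.
      set e1 := edge_deg n (sc a) b; set e2 := edge_deg n b c; set d0 := path_deg n (c :: t).
      set dd := dcoef k n m (sc a) b c.
      transitivity (dd * Y * (sgn k d0 * sgn k (e1 + e2 + 1 + d0) + sgn k (e1 + (e2 + d0)) * sgn k d0)); first by ring.
      rewrite -!sgnD sgn_sum0 ?mulr0 //; lia.
    + have am : (a <= m)%N by move: ra; rewrite /rng; lia.
      have cm : (c <= m)%N by move: rc; rewrite /rng; lia.
      rewrite F9 // F9 //; first by rewrite !mul0r mulr0 addr0.
      exact: sc_le.
transitivity ((dcoef k n m a b c * sgn k (path_deg n (c :: t)) * hop x [:: a, c & t] +
   S * (dcoef k n m (sc a) b c * sgn k (path_deg n (c :: t)) * Y) + Top (pop x) [:: a, b, c & t])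
   + S * (dcoef k n m a (sc a) b * sgn k (path_deg n [:: b, c & t])) * X); last by ring.
by rewrite HX HY add0r.
Qed.



Lemma rng_le a : rng a -> (a <= m)%N.
Proof. by rewrite /rng; lia. Qed.

Lemma lemB x : svalid x -> forall w, pop (dchain n m x) w = dchain n m (pop x) w.
Proof.
move=> Hx [|a w]; first by rewrite dchain_small.
rewrite [RHS](@dchain_head_ext _ (fun p => x [:: a, sc a & p])) //.
rewrite [LHS]/pop [LHS]dchain_cons hdterm_eq F6b !mul0r add0r [LHS]dchain_cons.
case: w => [|c r]; first by rewrite add0r.
rewrite hdterm_eq.
have [x0|xn] := eqVneq (x [:: a, sc a, c & r]) 0; first by rewrite x0 mulr0 add0r.
move: (Hx _ xn); rewrite !valid2 => /and3P[ra _ /and3P[_ _ vc]].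
by rewrite F5 // ?(valid_hd vc) // !mul0r add0r.
Qed.

Lemma lemC y : svalid y -> forall q, Top (dchain n m y) q = dchain n m (Top y) q.
Proof.
move=> Hy [|a [|b [|c t]]]; try by rewrite dchain_small.
rewrite [LHS]Top_eq [RHS]dchain_cons hdterm_eq [dchain n m (fun p => Top y (a :: p)) _]dchain_cons.
have [C|C] := boolP [&& c == a, b != a & rng b].
- rewrite [X in _ = _ + (_ + X)](@dchain_head_ext _ (fun p => sigT a b * y p)); last by move=> p; rewrite /= C.
  rewrite dchainZ.
  case/and3P: C => /eqP ca ba rb; subst c.
  case: t => [|d r].
    by rewrite /hdterm /Top !mulr0 !add0r.
  rewrite hdterm_eq !Top_eq eqxx (negbTE ba) /= andbF mulr0 add0r.
  have [da|da] := eqVneq d a; last by rewrite /= mulr0 add0r.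
  by subst d; rewrite F6c !mul0r add0r.
- rewrite [X in _ = _ + (_ + X)](@dchain_head_ext _ (fun p => 0)); last by move=> p; rewrite /= (negbTE C).
  rewrite dchain0 addr0.
  case: t => [|d r].
    by rewrite /hdterm /Top mulr0 add0r.
  rewrite hdterm_eq !Top_eq.
  have [da|da] := eqVneq d a; last by rewrite !andFb !mulr0 addr0.
  subst d.
  have [y0|yn] := eqVneq (y (a :: r)) 0.
    by rewrite y0 !mulr0 !if_same !mulr0 addr0.
  have ra := valid_hd (Hy _ yn).
  have [ca|ca] := eqVneq c a.
    by subst c; rewrite F6b F6c !mul0r add0r.
  have [ba|ba] := eqVneq b a.
    by subst b; rewrite F6a F6b !mul0r add0r.
  rewrite /=.
  case: (boolP (rng c)) => rc; case: (boolP (rng b)) => rb /=.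
  + rewrite !path_deg_cons2 sgnD; apply/esym.
    transitivity (sgn k (path_deg n (a :: r)) * y (a :: r) *
      (dcoef k n m a b c * sgn k (edge_deg n c a) * sigT a c + dcoef k n m b c a * sigT a b)); first by ring.
    by rewrite F7 // mulr0.
  + by rewrite F9 // ?rng_le // !mul0r mulr0 addr0.
  + by rewrite (@F9 b c a) // ?rng_le // !mul0r mulr0 addr0.
  + by rewrite !mulr0 addr0.
Qed.

Lemma hop_zero (f : chain k) q : (forall p, f p = 0) -> hop f q = 0.
Proof. by move=> H; case: q => [|a [|b t]] //; rewrite hop_eq H mulr0 if_same. Qed.

Lemma Top_ext (f g : chain k) q : (forall p, f p = g p) -> Top f q = Top g q.
Proof. by move=> H; case: q => [|a [|b [|c t]]] //; rewrite !Top_eq H. Qed.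

Lemma Top_zero (f : chain k) q : (forall p, f p = 0) -> Top f q = 0.
Proof. by move=> H; case: q => [|a [|b [|c t]]] //; rewrite Top_eq H mulr0 if_same. Qed.

Lemma nz_mulr (u v : k) : u * v != 0 -> v != 0.
Proof. by apply: contraNneq => ->; rewrite mulr0. Qed.

Section IJ.
Variables i j : nat.
Hypothesis Hi : rng i.
Hypothesis Hj : rng j.

Lemma chain_sv d x : is_chain n m i j d x -> svalid x.
Proof. by case=> _ H p /H []. Qed.

Lemma hop_chain d x : is_chain n m i j d x -> is_chain n m i j (d + 1) (hop x).
Proof.
case=> [[s Hs] Hw]; split.
  exists [seq (match p with a :: _ :: t => a :: t | _ => p end) | p <- s].
  move=> [|a [|b t]] /=; rewrite ?eqxx //; case: ifP => _; rewrite ?eqxx // => /nz_mulr /Hs H.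
  by apply/mapP; exists [:: a, sc a, b & t].
move=> [|a [|b t]] /=; rewrite ?eqxx //; case: ifP => [_|/norP [Hb1 Hb2]]; rewrite ?eqxx //.
move=> /nz_mulr /Hw [V Hh Hl Hd].
move: V; rewrite !valid2 => /and3P [ra _ /and3P [_ _ vb]].
have rb := valid_hd vb.
split => //.
- by rewrite valid2 ra eq_sym Hb2.
- rewrite -Hd !path_deg_cons2 (F1deg ra rb Hb2 Hb1); ring.
Qed.

Lemma Top_chain d y : is_chain n m i j d y -> is_chain n m i j (d + (n%:Z - 2)) (Top y).
Proof.
case=> [[s Hs] Hw]; split.
  exists [seq (head 0%N p :: b :: p) | p <- s, b <- iota 1 m].
  move=> [|a [|b [|c t]]] /=; rewrite ?eqxx //; case: ifP => [/and3P [/eqP ca ba rb]|]; rewrite ?eqxx //.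
  move=> /nz_mulr /Hs H; subst c.
  have Hb : b \in iota 1 m by rewrite mem_iota; move: rb; rewrite /rng; lia.
  exact: (allpairs_f (fun p b => [:: head 0%N p, b & p]) H Hb).
move=> [|a [|b [|c t]]] /=; rewrite ?eqxx //; case: ifP => [/and3P [/eqP ca ba rb]|]; rewrite ?eqxx //.
subst c; move=> /nz_mulr /Hw [V Hh Hl Hd].
have ra := valid_hd V.
split => //.
- by rewrite !valid2 ra rb V ba eq_sym ba.
rewrite !path_deg_cons2 addrA esum; last by rewrite eq_sym.
by rewrite Hd addrC.
Qed.

Lemma pop_chain d x : is_chain n m i j d x -> is_chain n m i j (d - (n%:Z - 2)) (pop x).
Proof.
case=> [[s Hs] Hw]; split.
  exists [seq drop 2 p | p <- s].
  move=> [|a w] /=; rewrite ?eqxx // => /Hs H.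
  by apply/mapP; exists [:: a, sc a, a & w].
move=> [|a w] /=; rewrite ?eqxx // => /Hw [V Hh Hl Hd].
move: V; rewrite !valid2 => /and3P [ra _ /and3P [_ _ va]].
split => //.
rewrite -Hd !path_deg_cons2 addrA esum; first by ring.
by rewrite eq_sym sc_neq.
Qed.

Lemma add_chain d (f g : chain k) : is_chain n m i j d f -> is_chain n m i j d g ->
  is_chain n m i j d (fun p => f p + g p).
Proof.
case=> [[s1 H1] W1] [[s2 H2] W2]; split.
  exists (s1 ++ s2) => p Hp; rewrite mem_cat.
  have [f0|fn] := eqVneq (f p) 0; last by rewrite H1.
  by rewrite H2 ?orbT //; move: Hp; rewrite f0 add0r.
move=> p Hp; have [f0|fn] := eqVneq (f p) 0; last exact: W1.
by apply: W2; move: Hp; rewrite f0 add0r.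
Qed.

Lemma scale_chain d (c : k) (f : chain k) : is_chain n m i j d f ->
  is_chain n m i j d (fun p => c * f p).
Proof.
case=> [[s H1] W1]; split; first by exists s => p /nz_mulr /H1.
by move=> p /nz_mulr /W1.
Qed.

Lemma zero_chain d : is_chain n m i j d (fun _ => 0 : k).
Proof. by split; [exists [::] | ]; move=> p; rewrite eqxx. Qed.

Definition nadj (p : seq nat) := if p is a :: s then path (fun a b => a != b) a s else true.

Lemma valid_nadj p : valid_path m p -> nadj p.
Proof. by case: p => // a s; rewrite /valid_path => /andP []. Qed.

Definition bw := if j == i then [:: i] else [:: i; sc i].
Fixpoint cw r := if r is r'.+1 then i :: sc i :: cw r' else bw.
Definition shift := path_deg n bw.
Definition critc (d : int) (r : nat) :=
  ((j == i) || (j == sc i)) && (d == shift + r%:Z * (n%:Z - 2)).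

Lemma cw_head r : exists t, cw r = i :: t.
Proof. by case: r => [|r] /=; [rewrite /bw; case: ifP => _; eexists | eexists]. Qed.

Lemma cw_second r u t : cw r = [:: i, u & t] -> u = sc i.
Proof. by case: r => [|r] /=; [rewrite /bw; case: ifP => _ [] | case]. Qed.

Lemma lemD r : forall g : chain k, (forall p, g p != 0 -> nadj p) -> dchain n m g (cw r) = 0.
Proof.
elim: r => [|r IH] g Hg.
  by rewrite /= /bw; case: ifP => _; rewrite dchain_small.
have [t Et] := cw_head r.
rewrite /= Et dchain_cons hdterm_eq F6b !mul0r add0r dchain_cons.
have -> : hdterm (fun p => g (i :: p)) (sc i) (i :: t) = 0.
  case: t Et => [|u t] Et //; rewrite hdterm_eq.
  rewrite (cw_second Et).
  have [g0|gn] := eqVneq (g [:: i, sc i, sc i & t]) 0; first by rewrite g0 mulr0.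
  by move: (Hg _ gn); rewrite /= eqxx andbF.
rewrite add0r -Et IH // => p Hp.
move: (Hg _ Hp); case: p {Hp} => [|a p] //=.
by case/andP => _ /andP [].
Qed.

Lemma base_zero d x : is_chain n m i j d x -> (forall r, critc d r -> x (cw r) = 0) ->
  forall q, base x q = 0.
Proof.
move=> [_ Hw] Hcr [|a [|b [|c t]]] //=.
- have [//|/Hw [V Hh Hl Hd]] := eqVneq (x [:: a]) 0.
  move: Hh Hl Hd => /= Hh Hl; subst a => Hd.
  have := Hcr 0%N; rewrite /critc /= /shift /bw -Hl eqxx /= path_deg1 mul0r addr0 -Hd path_deg1.
  by rewrite eqxx => /(_ isT).
- case: ifP => [/eqP Eb|//]; subst b.
  have [//|/Hw [V Hh Hl Hd]] := eqVneq (x [:: a; sc a]) 0.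
  move: Hh Hl Hd => /= Hh Hl; subst a => Hd.
  have ji : (j == i) = false by rewrite -Hl; apply/negbTE; exact: sc_neq.
  have := Hcr 0%N; rewrite /critc /= /shift /bw ji -Hl eqxx orbT /= mul0r addr0 -Hd.
  by rewrite eqxx => /(_ isT).
Qed.

Lemma critS d r : critc (d - (n%:Z - 2)) r -> critc d r.+1.
Proof.
rewrite /critc => /andP [-> /eqP E] /=; apply/eqP.
by rewrite -[d](subrK (n%:Z - 2)) E intS; ring.
Qed.

Lemma lemK N : forall (x : chain k) d, (forall p, x p != 0 -> (size p < N)%N) ->
  is_cycle n m i j d x -> (forall r, critc d r -> x (cw r) = 0) -> is_boundary n m i j d x.
Proof.
elim: N => [|N IH] x d Hs [Hc Hcyc] Hcr.
  exists (fun _ => 0); split; first exact: zero_chain.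
  move=> q; rewrite dchain0.
  by have [//|/Hs] := eqVneq (x q) 0.
have sv := chain_sv Hc.
have [g [Hg Hgeq]] : is_boundary n m i j (d - (n%:Z - 2)) (pop x).
  apply: IH.
  - move=> [|a p] /=; rewrite ?eqxx // => /Hs /=; lia.
  - split; first exact: pop_chain.
    move=> q; rewrite -lemB //; case: q => [|a p] //=; exact: Hcyc.
  - move=> r /critS Hr.
    have [t Et] := cw_head r.
    by rewrite Et /pop -Et -[i :: sc i :: cw r]/(cw r.+1) Hcr.
exists (fun p => hop x p + Top g p); split.
  apply: add_chain; first exact: hop_chain.
  have -> : d + 1 = d - (n%:Z - 2) + 1 + (n%:Z - 2) by ring.
  exact: Top_chain.
move=> q; rewrite dchainD (lemA sv q) (hop_zero _ Hcyc) (base_zero Hc Hcr) addr0 addr0.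
by rewrite (Top_ext _ Hgeq) (lemC (chain_sv Hg)).
Qed.

Hypothesis Hji : (j == i) || (j == sc i).

Fixpoint zc r : chain k :=
  if r is r'.+1 then Top (zc r') else (fun p => if p == bw then 1 else 0).

Lemma zc_chain r : is_chain n m i j (shift + r%:Z * (n%:Z - 2)) (zc r).
Proof.
elim: r => [|r IH].
  rewrite mul0r addr0; split.
    by exists [:: bw] => p /=; case: ifP => [/eqP ->|]; rewrite ?eqxx ?inE.
  move=> p /=; case: ifP => [/eqP ->|]; rewrite ?eqxx // => _.
  rewrite /bw /shift; case: ifP => [/eqP ji|ji].
    by split; rewrite ?valid1 // -ji.
  move: Hji; rewrite ji /= => /eqP Hj'.
  by split; rewrite ?valid2 ?valid1 ?Hi ?sc_rng ?(eq_sym i) ?sc_neq // Hj'.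
have -> : shift + r.+1%:Z * (n%:Z - 2) = shift + r%:Z * (n%:Z - 2) + (n%:Z - 2).
  by rewrite intS; ring.
exact: Top_chain.
Qed.

Lemma dchain_big0 (f : chain k) q : (forall p, size p = (size q).-1 -> f p = 0) ->
  dchain n m f q = 0.
Proof.
move=> H; rewrite /dchain big1_seq // => t; rewrite mem_index_iota => /andP [_ lt].
rewrite H ?mulr0 // size_cat size_take size_drop.
have -> : (t < size q)%N by lia.
lia.
Qed.

Lemma zc_cycle r q : dchain n m (zc r) q = 0.
Proof.
elim: r q => [|r IH] q.
  have [le2|gt2] := leqP (size q) 2; first exact: dchain_small.
  have [eq3|ne3] := eqVneq (size q) 3; last first.
    apply: dchain_big0 => p Hp /=; case: ifP => // /eqP Ep.
    by move: Hp; rewrite Ep /bw; case: ifP => _ /=; lia.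
  case: q eq3 {gt2} => [|a [|b [|c [|d t]]]] // _.
  rewrite dchain_cons hdterm_eq dchain_small // addr0 /=.
  case: ifP => [/eqP Ebw|_]; last by rewrite mulr0.
  move: Ebw; rewrite /bw; case: ifP => // _ [-> ->].
  by rewrite F8 // !mul0r.
rewrite /= -lemC; last exact: chain_sv (zc_chain r).
exact: Top_zero.
Qed.

Lemma zc_crit r : zc r (cw r) = 1.
Proof.
elim: r => [|r IH]; first by rewrite /= eqxx.
have [t Et] := cw_head r.
have -> : zc r.+1 (cw r.+1) = Top (zc r) (i :: sc i :: cw r) by [].
rewrite Et Top_eq eqxx sc_neq // sc_rng //= sigT_sc // -Et IH mulr1.
done.
Qed.

Lemma iso1 d r0 : critc d r0 -> homology_iso_free k n m i j d 1.
Proof.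
move=> Hc0.
have Ed : d = shift + r0%:Z * (n%:Z - 2) by case/andP: Hc0 => _ /eqP.
exists (fun x => \row_(l < 1) x (cw r0)); split.
- by move=> a x y _ _; apply/rowP => l; rewrite !mxE.
- move=> v; exists (fun p => v ord0 ord0 * zc r0 p); split.
    split; first by rewrite Ed; apply: scale_chain; exact: zc_chain.
    by move=> q; rewrite dchainZ zc_cycle mulr0.
  by apply/rowP => l; rewrite !mxE zc_crit mulr1 (ord1 l).
move=> x Hx; split.
- move/rowP/(_ ord0); rewrite !mxE => x0.
  have [s Hs] := Hx.1.1.
  apply: (@lemK (\max_(p <- s) size p).+1) => //.
    move=> p /Hs Hp; rewrite ltnS; exact: (@leq_bigmax_seq _ s xpredT size p Hp).
  move=> r Hr.
  suff -> : r = r0 by [].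
  move: Hr Hc0; rewrite /critc => /andP [_ /eqP E1] /andP [_ /eqP E2].
  have : r%:Z * (n%:Z - 2) = r0%:Z * (n%:Z - 2).
    by apply: (@addrI _ shift); rewrite -E1 -E2.
  move/(mulIf _) => H.
  have : r%:Z = r0%:Z by apply: H; apply/eqP; lia.
  by case.
- case=> g [Hg Hgx]; apply/rowP => l; rewrite !mxE Hgx.
  apply: lemD => p /(chain_sv Hg); exact: valid_nadj.
Qed.

End IJ.

Lemma iso0 i j d : rng i -> rng j -> (forall r, ~~ critc i j d r) ->
  homology_iso_free k n m i j d 0.
Proof.
move=> Hi Hj Hc.
exists (fun _ => 0); split.
- by move=> *; rewrite scaler0 addr0.
- move=> v; exists (fun _ => 0); split.
    by split; [exact: zero_chain | move=> q; rewrite dchain0].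
  by rewrite thinmx0.
move=> x Hx; split => // _.
have [s Hs] := Hx.1.1.
apply: (@lemK i j Hi Hj (\max_(p <- s) size p).+1) => //.
  move=> p /Hs Hp; rewrite ltnS; exact: (@leq_bigmax_seq _ s xpredT size p Hp).
by move=> r Hr; move: (Hc r); rewrite Hr.
Qed.

Lemma psr e s d : (0 < e)%N ->
  (poly_shift_rank e s d = 1%N /\ exists r : nat, d = s + r%:Z * e%:Z) \/
  (poly_shift_rank e s d = 0%N /\ forall r : nat, d != s + r%:Z * e%:Z).
Proof.
move=> e0; rewrite /poly_shift_rank; case: ifP => [/andP [H1 H2]|H].
- left; split => //; exists (absz ((d - s) %/ e%:Z)%Z).
  rewrite gez0_abs; last by rewrite divz_ge0 // ltz_nat.
  rewrite divzK //; ring.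
- right; split => // r; apply/eqP => Ed; move: H; rewrite Ed.
  have -> : s + r%:Z * e%:Z - s = r%:Z * e%:Z by ring.
  by rewrite dvdz_mull ?dvdzz // andbT -PoszM.
Qed.

Lemma ER_gen i j d s (rk : nat) :
  (forall r, critc i j d r = (d == s + r%:Z * (n%:Z - 2))) ->
  rk = poly_shift_rank (n - 2) s d ->
  (rk = 1%N /\ exists r, critc i j d r) \/ (rk = 0%N /\ forall r, ~~ critc i j d r).
Proof.
move=> Hc ->.
have e0 : (0 < n - 2)%N by lia.
have En : ((n - 2)%N)%:Z = n%:Z - 2 by lia.
case: (psr s d e0) => [[-> [r Er]]|[-> Hr]]; [left|right]; split => //.
  by exists r; rewrite Hc Er En eqxx.
by move=> r; rewrite Hc -En.
Qed.

Lemma ER i j d : rng i -> rng j ->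
  (expected_rank n m i j d = 1%N /\ exists r, critc i j d r) \/
  (expected_rank n m i j d = 0%N /\ forall r, ~~ critc i j d r).
Proof.
move=> Hi Hj; rewrite /expected_rank.
case: ifP => [/eqP ji|jni].
  subst j; apply: (@ER_gen _ _ _ 0) => // r.
  by rewrite /critc /shift /bw !eqxx /= path_deg1.
case: ifP => [/andP [/eqP ji Hi2]|H2].
  subst j; apply: (@ER_gen _ _ _ 0) => // r.
  have sci : sc i = i.+1 by rewrite /sc; case: ifP => // /eqP; lia.
  rewrite /critc /shift /bw jni sci eqxx /= path_deg_cons2 path_deg1 /edge_deg ltnSn.
  congr (_ == _); congr (_ + _); lia.
case: ifP => [/andP [/eqP im /eqP j1]|H3].
  subst i j; apply: (@ER_gen _ _ _ (n%:Z - m%:Z)) => // r.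
  have sci : sc m = 1%N by rewrite /sc eqxx.
  rewrite /critc /shift /bw jni sci eqxx orbT /= path_deg_cons2 path_deg1 /edge_deg.
  have -> : (m < 1)%N = false by lia.
  congr (_ == _); congr (_ + _); lia.
right; split => // r; rewrite /critc jni /=.
suff -> : (j == sc i) = false by [].
move: H2 H3; rewrite /sc; case: ifP => [/eqP im|im] H2 H3.
  by move: H3; rewrite ?im ?eqxx.
have Hi' : (1 <= i <= m - 1)%N by move: Hi im; rewrite /rng => Hi /negbT; lia.
by move: H2; rewrite Hi' andbT.
Qed.

Lemma final i j d : rng i -> rng j ->
  homology_iso_free k n m i j d (expected_rank n m i j d).
Proof.
move=> Hi Hj.
case: (ER d Hi Hj) => [[-> [r0 Hr0]]|[-> Hr]].
  apply: (@iso1 i j Hi Hj _ d r0 Hr0).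
  by case/andP: Hr0.
exact: iso0.
Qed.

End S.


Unset Implicit Arguments.

Theorem mainTheorem2 (k : comPzRingType) (n m : nat) :
  (3 <= n)%N -> (3 <= m)%N ->
  forall i j : nat, (1 <= i <= m)%N -> (1 <= j <= m)%N ->
  forall d : int, homology_iso_free k n m i j d (expected_rank n m i j d).
Proof.
move=> Hn Hm i j Hi Hj d.
by apply: final => //; rewrite /rng; lia.
Qed.
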